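(* Let $n\ge2$, let $A$ be an $n\times n$ matrix with strictly positive entries, let $p:=\sqrt{R(A)}$, and define for $h\ge0$ \[ \Theta(h)=2\log\!\left(\frac{1+p\,e^{h/2}}{p+e^{h/2}}\right). \] Then for all $x,y\in\mathbb{R}^n_{>0}$, $d_H(Ax,Ay)\le\Theta(d_H(x,y))$. Moreover, if $p>1$, then $\Theta$ is increasing and concave on $[0,\infty)$, $\Theta(0)=0$, $\Theta'(0)=\kappa(A):=\frac{p-1}{p+1}$, $\lim_{h\to\infty}\Theta(h)=\log R(A)$, and $\Theta(h)\le\kappa(A)h$ for all $h\ge0$; consequently $d_H(Ax,Ay)\le\kappa(A)\,d_H(x,y)$ for all $x,y\in\mathbb{R}^n_{>0}$.
   Context: For a matrix $A=(a_{ik})$ with strictly positive entries, its distortion is $R(A)=\max_{i,j,k,\ell}\frac{a_{ik}a_{j\ell}}{a_{i\ell}a_{jk}}$. For $x,y\in\mathbb{R}^n_{>0}$, $\mathrm{Dist}(x,y)=\max_{i,j}\frac{y_ix_j}{y_jx_i}$ and the Hilbert metric is $d_H(x,y)=\log\mathrm{Dist}(x,y)$. *)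

(* Defs.v *)
From HB Require Import structures.
From mathcomp Require Import all_boot all_order all_algebra.
From mathcomp Require Import all_classical all_reals all_analysis.
Set Implicit Arguments. Unset Strict Implicit. Unset Printing Implicit Defensive.
Import Order.TTheory GRing.Theory Num.Theory.
Local Open Scope ring_scope.

Definition posmx (R : realType) (m n : nat) (A : 'M[R]_(m, n)) : Prop :=
  forall i j, 0 < A i j.

Definition distortion (R : realType) (n : nat) (A : 'M[R]_n) : R :=
  \big[Num.max/0]_(q : 'I_n * 'I_n * 'I_n * 'I_n)
     (let: (i, j, k, l) := q in (A i k * A j l) / (A i l * A j k)).

Definition Dist (R : realType) (n : nat) (x y : 'cV[R]_n) : R :=
  \big[Num.max/0]_(q : 'I_n * 'I_n)
     (let: (i, j) := q in (y i 0 * x j 0) / (y j 0 * x i 0)).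

Definition dH (R : realType) (n : nat) (x y : 'cV[R]_n) : R := ln (Dist x y).

Definition sqrtR_dist (R : realType) (n : nat) (A : 'M[R]_n) : R :=
  Num.sqrt (distortion A).

Definition Theta (R : realType) (n : nat) (A : 'M[R]_n) (h : R) : R :=
  let p := sqrtR_dist A in
  2 * ln ((1 + p * expR (h / 2)) / (p + expR (h / 2))).

Definition kappa (R : realType) (n : nat) (A : 'M[R]_n) : R :=
  let p := sqrtR_dist A in (p - 1) / (p + 1).

(* Main.v *)
Require Import Defs.
From HB Require Import structures.
From mathcomp Require Import all_boot all_order all_algebra.
From mathcomp Require Import all_classical all_reals all_analysis.
Import Order.TTheory GRing.Theory Num.Theory numFieldNormedType.Exports.
From mathcomp Require Import ring lra.
Local Open Scope classical_set_scope.
Local Open Scope ring_scope.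

Section Aux.
Context {R : realType}.


Lemma dhalf (h : R) : is_derive h 1 (fun x : R => x / 2) (2^-1).
Proof.
have H := @is_deriveM R R (@id R) (cst (2^-1)) h 1 1 0 (is_derive_id _ _) (is_derive_cst _ _ _).
have -> : (fun x : R => x / 2) = (@id R * cst (2^-1))%R by apply/funext.
apply: (is_derive_eq H); rewrite /GRing.scale /=; ring.
Qed.

Lemma dE (h : R) : is_derive h 1 (fun x : R => expR (x / 2)) (expR (h/2) * 2^-1).
Proof.
exact: (@is_derive1_comp R expR (fun x : R => x / 2) h _ _ _ (dhalf h)).
Qed.

Definition Tf (p h : R) := 2 * (ln (1 + p * expR (h/2)) - ln (p + expR (h/2))).
Definition dT (p h : R) := let E := expR (h/2) in
  (p ^+ 2 - 1) * E / ((1 + p * E) * (p + E)).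

Lemma dcst_plus (c : R) (f : R -> R) (h df : R) : is_derive h 1 f df ->
  is_derive h 1 (fun x => c + f x) df.
Proof.
move=> H; have H2 := @is_deriveD R R R (cst c) f h 1 0 df (is_derive_cst _ _ _) H.
by apply: (is_derive_eq H2); rewrite add0r.
Qed.

Lemma dcst_mul (c : R) (f : R -> R) (h df : R) : is_derive h 1 f df ->
  is_derive h 1 (fun x => c * f x) (c * df).
Proof.
move=> H; have H2 := @is_deriveM R R (cst c) f h 1 0 df (is_derive_cst _ _ _) H.
by apply: (is_derive_eq H2); rewrite /GRing.scale /=; ring.
Qed.

Lemma dln (f : R -> R) (h df : R) : 0 < f h -> is_derive h 1 f df ->
  is_derive h 1 (fun x => ln (f x)) (df / f h).
Proof.
move=> fp H; have H2 := @is_derive1_comp R (@ln R) f h _ _ (is_derive1_ln fp) H.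
by apply: (is_derive_eq H2); rewrite mulrC.
Qed.

Lemma dTf (p h : R) : 0 <= p -> is_derive h 1 (Tf p) (dT p h).
Proof.
move=> p0.
have Ep := expR_gt0 (h/2).
have h1 : 0 < 1 + p * expR (h/2) by rewrite ltr_pwDl // mulr_ge0 // ltW.
have h2 : 0 < p + expR (h/2) by rewrite ltr_wpDl.
have D1 := @dln (fun x => 1 + p * expR (x/2)) h _ h1 (dcst_plus 1 _ _ _ (dcst_mul p _ _ _ (dE h))).
have D2 := @dln (fun x => p + expR (x/2)) h _ h2 (dcst_plus p _ _ _ (dE h)).
have D3 := dcst_mul 2 _ _ _ (@is_deriveB R R R _ _ h 1 _ _ D1 D2).
apply: (is_derive_eq D3).
rewrite /dT /=; field.
by rewrite !gt_eqF.
Qed.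

Lemma dT_pos (p h : R) : 1 < p -> 0 < dT p h.
Proof.
move=> p1; rewrite /dT /=; have Ep := expR_gt0 (h/2).
apply: divr_gt0; first by apply: mulr_gt0 => //; nra.
apply: mulr_gt0; nra.
Qed.

Lemma dT_anti (p x c : R) : 1 < p -> 0 <= x -> x <= c -> dT p c <= dT p x.
Proof.
move=> p1 x0 xc; rewrite /dT /=.
have Ex : 1 <= expR (x/2) by rewrite -expR0 ler_expR divr_ge0.
have Ec : expR (x/2) <= expR (c/2) by rewrite ler_expR ler_pM2r // invr_gt0.
set a := expR (x/2) in Ex Ec *; set b := expR (c/2) in Ec *.
have d1 : 0 < (1 + p * b) * (p + b) by apply: mulr_gt0; nra.
have d2 : 0 < (1 + p * a) * (p + a) by apply: mulr_gt0; nra.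
rewrite ler_pdivrMr // mulrAC ler_pdivlMr //.
have : 0 <= (p ^+ 2 - 1) * (p * (b - a) * (a * b - 1)).
  by apply: mulr_ge0; [nra | apply: mulr_ge0; [apply: mulr_ge0|]; nra].
move=> H; rewrite -subr_ge0; apply: le_trans H _; rewrite le_eqVlt; apply/orP; left; apply/eqP; ring.
Qed.

Lemma Tf_cont (p a b : R) : 0 <= p -> {within `[a, b], continuous (Tf p)}.
Proof.
move=> p0; apply: derivable_within_continuous => x _.
by case: (dTf p x p0).
Qed.

Lemma Tf_tangent (p x c : R) : 1 < p -> 0 <= x -> 0 <= c ->
  Tf p x <= Tf p c + dT p c * (x - c).
Proof.
move=> p1 x0 c0; have p0 : 0 <= p by lra.
case: (lerP x c) => hxc.
  have [d dI H] := @MVT_segment R (Tf p) (dT p) x c hxc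
    (fun z _ => dTf p z p0) (Tf_cont p x c p0).
  move: dI; rewrite in_itv /= => /andP[xd dc].
  have := dT_anti _ _ _ p1 (le_trans x0 xd) dc.
  have : 0 <= c - x by lra.
  nra.
have [d dI H] := @MVT_segment R (Tf p) (dT p) c x (ltW hxc)
    (fun z _ => dTf p z p0) (Tf_cont p c x p0).
move: dI; rewrite in_itv /= => /andP[cd dx].
have := dT_anti _ _ _ p1 c0 cd.
have : 0 <= x - c by lra.
nra.
Qed.

Lemma Tf_incr (p a b : R) : 1 < p -> a < b -> Tf p a < Tf p b.
Proof.
move=> p1 ab; have p0 : 0 <= p by lra.
have [d dI H] := @MVT R (Tf p) (dT p) a b ab
    (fun z _ => dTf p z p0) (Tf_cont p a b p0).
have := dT_pos p d p1.
have : 0 < b - a by lra.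
nra.
Qed.

Lemma Tf0 (p : R) : 0 <= p -> Tf p 0 = 0.
Proof. by move=> _; rewrite /Tf mul0r expR0 mulr1 [1 + p]addrC subrr mulr0. Qed.

Lemma dT0 (p : R) : 0 <= p -> dT p 0 = (p - 1) / (p + 1).
Proof.
move=> p0; rewrite /dT /= mul0r expR0 mulr1 addrC; field.
by rewrite gt_eqF //; lra.
Qed.

Lemma rr_cvg (p : R) : 1 < p ->
  (fun h => (1 + p * expR (h/2)) / (p + expR (h/2))) @ +oo --> p.
Proof.
move=> p1; apply/cvgrPdist_lt => e e0.
exists (2 * (p ^+ 2 - 1) / e); split; first by rewrite num_real.
move=> h hM.
have Eh : 1 + h / 2 <= expR (h/2) by apply: expR_ge1Dx.
have hp : 0 < p + expR (h/2) by have := expR_gt0 (h/2); lra.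
have -> : p - (1 + p * expR (h / 2)) / (p + expR (h / 2)) =
   (p ^+ 2 - 1) / (p + expR (h/2)) by field; rewrite gt_eqF.
rewrite ger0_norm; last by apply: divr_ge0; nra.
rewrite ltr_pdivrMr //.
move: hM; rewrite ltr_pdivrMr // => hM.
nra.
Qed.


Lemma Q_ge1 (p M Q : R) : 1 <= p -> 1 <= M -> Q * (p + M)^+2 = (1 + p * M)^+2 -> 1 <= Q.
Proof.
move=> p1 M1 HQ.
have pm : 0 < (p + M)^+2 by apply: exprn_gt0; lra.
have : (p + M)^+2 <= (1 + p * M)^+2.
  rewrite ler_sqr ?nnegrE; nra.
rewrite -HQ -{1}(mul1r ((p + M)^+2)) ler_pM2r //.
Qed.

Lemma poly_core (a b c d p M Q : R) : 0 <= a -> 0 <= b -> 0 <= c -> 0 <= d ->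
  1 <= p -> 1 <= M -> Q * (p + M)^+2 = (1 + p * M)^+2 ->
  a * d <= p^+2 * (b * c) ->
  0 <= Q * (a + b) * (d + M^+2 * c) - (c + d) * (b + M^+2 * a).
Proof.
move=> a0 b0 c0 d0 p1 M1 HQ had.
have Q1 := Q_ge1 _ _ _ p1 M1 HQ.
have QD : 1 <= Q * M^+2 by rewrite -[1]mulr1 ler_pM // ?expr_ge1 //; lra.
set E0 := b * ((Q - 1) * d + (Q * M^+2 - 1) * c).
set e1 := Q * (d + M^+2 * c) - M^+2 * (c + d).
have E0p : 0 <= E0 by rewrite mulr_ge0 // addr_ge0 // mulr_ge0 // subr_ge0.
have -> : Q * (a + b) * (d + M^+2 * c) - (c + d) * (b + M^+2 * a) = E0 + a * e1.
  rewrite /E0 /e1; ring.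
case: (lerP 0 e1) => he1.
  by rewrite addr_ge0 // mulr_ge0.
case: (lerP d 0) => hd.
  have -> : E0 + a * e1 = c * ((Q * M^+2 - 1) * b + (Q - 1) * M^+2 * a).
    rewrite /E0 /e1 (_ : d = 0); [ring | lra].
  rewrite mulr_ge0 // addr_ge0 // ?mulr_ge0 // ?subr_ge0 //; lra.
have key : d * E0 + p^+2 * b * c * e1 = b * (Q - 1) * (p * M * c - d)^+2
    + b * c * d * (Q * (p + M)^+2 - (1 + p * M)^+2).
  rewrite /E0 /e1; ring.
rewrite HQ subrr mulr0 addr0 in key.
have k2 : 0 <= d * E0 + p^+2 * b * c * e1.
  by rewrite key mulr_ge0 // ?sqr_ge0 // mulr_ge0 // subr_ge0.
have k3 : p^+2 * b * c * e1 <= (a * d) * e1.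
  apply: ler_wnM2r; [lra | by rewrite -mulrA].
rewrite -(pmulr_rge0 _ hd) mulrDr; nra.
Qed.



Lemma sum_core (n : nat) (k0 : 'I_n) (r s z : 'I_n -> R) (p M Q : R) :
  (forall k, 0 < r k) -> (forall k, 0 < s k) -> (forall k, 0 < z k) ->
  (forall k l, z k <= M^+2 * z l) ->
  (forall k l, r k * s l <= p^+2 * (r l * s k)) ->
  1 <= p -> 1 <= M -> Q * (p + M)^+2 = (1 + p * M)^+2 ->
  (\sum_k r k * z k) * (\sum_k s k) <= Q * ((\sum_k s k * z k) * (\sum_k r k)).
Proof.
move=> rp sp zp zD rs p1 M1 HQ.
have [km _ hkm] : exists2 km, true & forall k, z km <= z k.
  case: (@arg_minP _ _ _ k0 xpredT z erefl) => km _ H; exists km => //.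
  by move=> k; apply: H.
set Rt := \sum_k r k; set St := \sum_k s k.
pose c k := Q * s k * Rt - r k * St.
set m := z km.
have m0 : 0 < m by apply: zp.
rewrite -subr_ge0.
have -> : Q * ((\sum_k s k * z k) * Rt) - (\sum_k r k * z k) * St
    = \sum_k c k * z k.
  rewrite mulrA mulr_sumr !mulr_suml -sumrB; apply: eq_bigr => k _.
  rewrite /c; ring.
pose S := fun k => c k < 0.
apply: (@le_trans _ _ (\sum_k m * (if S k then M^+2 * c k else c k))).
  rewrite -mulr_sumr (bigID S) /=.
  rewrite (eq_bigr (fun k => M^+2 * c k)); last by move=> k ->.
  rewrite [X in _ * (_ + X)](eq_bigr c); last by move=> k /negbTE ->.
  rewrite pmulr_rge0 //.
  rewrite -mulr_sumr.
  set a := \sum_(k | S k) r k; set b := \sum_(k | ~~ S k) r k.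
  set cc := \sum_(k | S k) s k; set d := \sum_(k | ~~ S k) s k.
  have eR : Rt = a + b by rewrite /Rt (bigID S).
  have eS : St = cc + d by rewrite /St (bigID S).
  have -> : \sum_(k | S k) c k = Q * cc * Rt - a * St.
    by rewrite /c sumrB -!mulr_suml -mulr_sumr.
  have -> : \sum_(k | ~~ S k) c k = Q * d * Rt - b * St.
    by rewrite /c sumrB -!mulr_suml -mulr_sumr.
  have hadS : a * d <= p^+2 * (b * cc).
    have e1 : a * d = \sum_(k | S k) \sum_(l | ~~ S l) r k * s l.
      rewrite /a /d big_distrl; apply: eq_bigr => k _; by rewrite big_distrr.
    have e2 : b * cc = \sum_(k | S k) \sum_(l | ~~ S l) r l * s k.
      rewrite /b /cc mulrC big_distrl; apply: eq_bigr => k _.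
      rewrite big_distrr; apply: eq_bigr => l _; by rewrite mulrC.
    rewrite e1 e2 mulr_sumr; apply: ler_sum => k _.
    rewrite mulr_sumr; apply: ler_sum => l _; exact: rs.
  have := @poly_core a b cc d p M Q _ _ _ _ p1 M1 HQ hadS.
  rewrite eR eS.
  have ge0 : forall P, 0 <= \sum_(k | P k) r k.
    by move=> P; apply: sumr_ge0 => k _; apply: ltW.
  have ge0s : forall P, 0 <= \sum_(k | P k) s k.
    by move=> P; apply: sumr_ge0 => k _; apply: ltW.
  move=> /(_ (ge0 _) (ge0 _) (ge0s _) (ge0s _)) H.
  apply: le_trans H _; rewrite le_eqVlt; apply/orP; left; apply/eqP; ring.
apply: ler_sum => k _.
have zk1 : m <= z k by apply: hkm.
have zk2 : z k <= M^+2 * m by apply: zD.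
rewrite /S; case: ltrP => hc.
  rewrite mulrA [m * _]mulrC; nra.
nra.
Qed.
End Aux.

Lemma dist_ge1 {R : realType} {n : nat} (k0 : 'I_n) {A : 'M[R]_n} :
  posmx A -> 1 <= distortion A.
Proof.
move=> Ap; rewrite /distortion.
apply: le_trans (le_bigmax _ _ (k0, k0, k0, k0)) => /=.
by rewrite divff // mulf_neq0 // gt_eqF.
Qed.

Lemma dist_term {R : realType} {n : nat} (A : 'M[R]_n) i j k l :
  A i k * A j l / (A i l * A j k) <= distortion A.
Proof. exact: (le_bigmax _ _ (i, j, k, l)). Qed.

Lemma Dist_ge1 {R : realType} {n : nat} (k0 : 'I_n) {x y : 'cV[R]_n} :
  posmx x -> posmx y -> 1 <= Dist x y.
Proof.
move=> xp yp; rewrite /Dist.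
apply: le_trans (le_bigmax _ _ (k0, k0)) => /=.
by rewrite divff // mulf_neq0 // gt_eqF.
Qed.

Lemma Dist_term {R : realType} {n : nat} (x y : 'cV[R]_n) i j :
  y i 0 * x j 0 / (y j 0 * x i 0) <= Dist x y.
Proof. exact: (le_bigmax _ _ (i, j)). Qed.

Lemma sum_pos {R : realType} {n : nat} (k0 : 'I_n) (F : 'I_n -> R) :
  (forall k, 0 < F k) -> 0 < \sum_k F k.
Proof.
move=> Fp; rewrite (bigD1 k0) //=; apply: lt_le_trans (Fp k0) _.
by rewrite lerDl; apply: sumr_ge0 => k _; apply: ltW.
Qed.

Lemma Theta_Tf {R : realType} {n : nat} (A : 'M[R]_n) :
  Theta A = Tf (sqrtR_dist A).
Proof.
apply/funext => h; rewrite /Theta /Tf /=.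
have p0 : 0 <= sqrtR_dist A by apply: sqrtr_ge0.
have Ep := expR_gt0 (h/2).
rewrite ln_div // posrE.
  by rewrite ltr_pwDl // mulr_ge0 // ltW.
by rewrite ltr_wpDl.
Qed.

Lemma main_part1 {R : realType} {n : nat} (k0 : 'I_n) {A : 'M[R]_n} :
  posmx A ->
  (forall x y : 'cV[R]_n, posmx x -> posmx y ->
     dH (A *m x) (A *m y) <= Theta A (dH x y)).
Proof.
move=> Ap x y xp yp.
set p := sqrtR_dist A.
have R1 := dist_ge1 k0 Ap.
have p0 : 0 <= p by apply: sqrtr_ge0.
have pp : p ^+ 2 = distortion A by rewrite sqr_sqrtr //; lra.
have p1 : 1 <= p by nra.
set D := Dist x y.
have D1 : 1 <= D by apply: Dist_ge1.
set h := dH x y.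
set M := expR (h / 2).
have MD : M ^+ 2 = D.
  rewrite /M -expRM_natr (_ : h / 2 * 2%:R = h); last by field.
  by rewrite /h /dH lnK // posrE (lt_le_trans ltr01 D1).
have M1 : 1 <= M by rewrite /M -expR0 ler_expR divr_ge0 // /h /dH ln_ge0.
set Q := ((1 + p * M) / (p + M)) ^+ 2.
have HQ : Q * (p + M) ^+ 2 = (1 + p * M) ^+ 2.
  rewrite /Q expr_div_n; field; rewrite gt_eqF //; lra.
have Q1 := Q_ge1 _ _ _ p1 M1 HQ.
have ThQ : Theta A h = ln Q.
  rewrite /Theta /= -/p -/M /Q lnXn ?mulr_natl //.
  by apply: divr_gt0; nra.
rewrite ThQ /dH.
have Dp : 0 < Dist (A *m x) (A *m y).
  apply: lt_le_trans ltr01 _; apply: (Dist_ge1 k0) => i j; rewrite mxE;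
  by apply: (sum_pos k0) => k; apply: mulr_gt0.
rewrite ler_ln ?posrE //; last by lra.
apply: bigmax_le; first by lra.
move=> [i j] _ /=.
pose r k := A i k * x k 0; pose s k := A j k * x k 0; pose z k := y k 0 / x k 0.
have rp k : 0 < r k by apply: mulr_gt0.
have sp k : 0 < s k by apply: mulr_gt0.
have zp k : 0 < z k by apply: divr_gt0.
have zD k l : z k <= M ^+ 2 * z l.
  have -> : z k = (y k 0 * x l 0 / (y l 0 * x k 0)) * z l.
    rewrite /z; field; rewrite !gt_eqF //.
  rewrite ler_pM2r // MD; exact: Dist_term.
have rs k l : r k * s l <= p ^+ 2 * (r l * s k).
  have -> : r k * s l = (A i k * A j l / (A i l * A j k)) * (r l * s k).
    rewrite /r /s; field; rewrite !gt_eqF //.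
  rewrite ler_pM2r ?mulr_gt0 // pp; exact: dist_term.
have := sum_core _ k0 _ _ _ _ _ _ rp sp zp zD rs p1 M1 HQ.
have e1 : forall i0, (A *m y) i0 0 = \sum_k A i0 k * x k 0 * z k.
  move=> i0; rewrite mxE; apply: eq_bigr => k _; rewrite /z; field; rewrite gt_eqF //.
have e2 : forall i0, (A *m x) i0 0 = \sum_k A i0 k * x k 0.
  by move=> i0; rewrite mxE.
rewrite !e1 !e2 => H.
rewrite ler_pdivrMr; first exact: H.
apply: mulr_gt0; apply: (sum_pos k0) => k.
  by apply: mulr_gt0; [apply: mulr_gt0; [apply: Ap | apply: xp] | apply: zp].
by apply: mulr_gt0; [apply: Ap | apply: xp].
Qed.

Theorem mainTheorem12 (R : realType) (n : nat) (A : 'M[R]_n) :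
  (1 < n)%N -> posmx A ->
  (forall x y : 'cV[R]_n, posmx x -> posmx y ->
     dH (A *m x) (A *m y) <= Theta A (dH x y)) /\
  (1 < sqrtR_dist A ->
     (forall a b : R, 0 <= a -> a < b -> Theta A a < Theta A b) /\
         (forall a b t : R, 0 <= a -> 0 <= b -> 0 <= t <= 1 ->
            t * Theta A a + (1 - t) * Theta A b <= Theta A (t * a + (1 - t) * b)) /\
         Theta A 0 = 0 /\
         is_derive (0 : R) 1 (Theta A) (kappa A) /\
         (Theta A h @[h --> +oo%R] --> ln (distortion A)) /\
         (forall h : R, 0 <= h -> Theta A h <= kappa A * h) /\
         (forall x y : 'cV[R]_n, posmx x -> posmx y ->
            dH (A *m x) (A *m y) <= kappa A * dH x y)).
Proof.
move=> n1 Ap.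
pose k0 : 'I_n := Ordinal (ltnW n1).
have P1 := main_part1 k0 Ap.
split => // p1.
set p := sqrtR_dist A in p1.
have p0 : 0 <= p by lra.
have R1 := dist_ge1 k0 Ap.
have pp : p ^+ 2 = distortion A by rewrite sqr_sqrtr //; lra.
have ThE := Theta_Tf A; rewrite -/p in ThE.
have kE : kappa A = dT p 0 by rewrite dT0.
have tan0 : forall h, 0 <= h -> Theta A h <= kappa A * h.
  move=> h h0; rewrite ThE kE.
  have := Tf_tangent _ _ _ p1 h0 (lexx 0); rewrite Tf0 // subr0 add0r.
  by [].
split; first by move=> a b a0 ab; rewrite ThE; apply: Tf_incr.
split.
  move=> a b t a0 b0 /andP[t0 t1]; rewrite ThE.
  set c := t * a + (1 - t) * b.
  have c0 : 0 <= c by rewrite /c addr_ge0 // mulr_ge0 // subr_ge0.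
  have ha := Tf_tangent _ _ _ p1 a0 c0.
  have hb := Tf_tangent _ _ _ p1 b0 c0.
  have e : t * (Tf p c + dT p c * (a - c)) + (1 - t) * (Tf p c + dT p c * (b - c))
     = Tf p c by rewrite /c; ring.
  rewrite -[X in _ <= X]e lerD // ?ler_wpM2l // subr_ge0.
  done.
split; first by rewrite ThE Tf0.
split; first by rewrite ThE kE; apply: dTf.
split; last first.
  split => // x y xp yp; apply: le_trans (P1 x y xp yp) _.
  apply: tan0; rewrite /dH ln_ge0 //; exact: Dist_ge1.
have -> : ln (distortion A) = 2 * ln p.
  by rewrite -pp lnXn ?mulr_natl //; lra.
have cl : {for p, continuous (@ln R)} by apply: continuous_ln; lra.
have -> : Theta A = fun h => 2 * ((@ln R \o (fun h : R => (1 + p * expR (h / 2)) / (p + expR (h / 2)))) h).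
  by apply/funext => h; rewrite /Theta.
apply: cvgMl_tmp.
apply: continuous_cvg => //.
exact: rr_cvg.
Qed.
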